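(* Let $G$ be a finite simple graph and let $1\le k<\nu(G)$. If $I(G)^{[k]}$ is linearly related, then $I(G)^{[k+1]}$ is linearly related.
   Context: $G$ is a finite simple graph on vertex set $\{x_1,\ldots,x_n\}$ identified with the variables of $S=K[x_1,\ldots,x_n]$ ($K$ a field); edges are identified with degree-2 monomials. $I(G)^{[k]}$ (the $k$th squarefree power of the edge ideal) is generated by all products $e_1\cdots e_k$ over $k$-matchings $\{e_1,\ldots,e_k\}$ of $G$; it is generated in degree $2k$. $\nu(G)$ is the matching number. A graded ideal $I$ generated in a single degree $d$ is linearly related if its first syzygy module is generated by linear relations, i.e. $\dim_K\operatorname{Tor}_1^S(I,K)_j=0$ for all $j\neq d+1$. *)

(* Defs.v *)
From HB Require Import structures.
From mathcomp Require Import all_boot all_order all_algebra.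
Set Implicit Arguments. Unset Strict Implicit. Unset Printing Implicit Defensive.
Import Order.TTheory GRing.Theory Num.Theory.

(* A finite simple graph on the finite vertex type V is a symmetric,
   irreflexive relation E.  Vertices are identified with the variables of
   S = K[x_v : v in V]. *)
Definition simple_graph (V : finType) (E : rel V) : Prop :=
  symmetric E /\ irreflexive E.

Section Graph.
Variables (V : finType) (E : rel V).

Definition is_edge (e : {set V}) : bool :=
  [exists x, exists y, E x y && (e == [set x; y])].

Definition is_matching (M : {set {set V}}) : bool :=
  [forall e in M, is_edge e] && trivIset M.

Definition matching_number : nat :=
  \max_(M : {set {set V}} | is_matching M) #|M|.

(* The (squarefree) monomial e_1 ... e_k of a k-matching {e_1,..,e_k} is
   x_{cover M}; [sqf_gens k] is the set of supports of the minimal monomial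
   generators of I(G)^[k]. *)
Definition sqf_gens (k : nat) : {set {set V}} :=
  [set S : {set V} | [exists M : {set {set V}},
      [&& is_matching M, #|M| == k & cover M == S]]].
End Graph.

Section Tor1.
Variables (K : fieldType) (V : finType).

(* multidegrees a in N^V ; the squarefree monomial x_S divides x^a *)
Definition sdivides (S : {set V}) (a : V -> nat) : bool :=
  [forall v in S, 0 < a v]%N.

Definition mdec (a : V -> nat) (i : V) : V -> nat :=
  fun v => if v == i then (a v).-1 else a v.

(* Let I be generated by the distinct squarefree monomials x_S, S in gens,
   F = (+)_S S(-|S|) e_S -> I the (minimal) presentation e_S |-> x_S.
   The multidegree-a component of the syzygy module Syz = ker(F -> I) is
   the set of coefficient vectors c (c_S = coefficient of x^a/x_S e_S)
   supported on the generators dividing x^a, with sum 0. *)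
Definition syz_comp (gens : {set {set V}}) (a : V -> nat) (c : {set V} -> K)
  : Prop :=
  (forall S, (c S != 0)%R -> (S \in gens) && sdivides S a) /\
  (\sum_(S : {set V}) c S = 0)%R.

(* Tor_1^S(I,K)_a = Syz_a / (m Syz)_a vanishes iff Syz_a is the sum of the
   images x_i Syz_{a - e_i} (i with a_i > 0); multiplication by x_i is the
   identity on coefficient vectors. *)
Definition tor1_vanishes (gens : {set {set V}}) (a : V -> nat) : Prop :=
  forall c, syz_comp gens a c ->
  exists cs : V -> {set V} -> K,
    (forall i, syz_comp gens (mdec a i) (cs i) /\
               (a i = 0%N -> forall S, cs i S = 0%R)) /\
    (forall S, c S = (\sum_(i : V) cs i S)%R).

(* An ideal generated in degree d is linearly related iff
   dim_K Tor_1(I,K)_j = 0 for all j <> d+1, i.e. Tor_1(I,K)_a = 0 for all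
   multidegrees a with |a| <> d+1. *)
Definition linearly_related_gens (gens : {set {set V}}) (d : nat) : Prop :=
  forall a : V -> nat, (\sum_(v : V) a v)%N <> d.+1 -> tor1_vanishes gens a.

Definition sqf_power_linearly_related (E : rel V) (k : nat) : Prop :=
  linearly_related_gens (sqf_gens E k) (2 * k).
End Tor1.

(* Main.v *)
Require Import Defs.
From HB Require Import structures.
From mathcomp Require Import all_boot all_order all_algebra.
Set Implicit Arguments. Unset Strict Implicit. Unset Printing Implicit Defensive.
Import Order.TTheory GRing.Theory Num.Theory.


Definition delta (K : fieldType) (V : finType) (S : {set V}) : {set V} -> K :=
  fun X => if X == S then 1%R else 0%R.

Definition Hrel (V : finType) (gens : {set {set V}}) (T : {set V}) : rel {set V} :=
  fun X Y => [&& X \in gens, X \subset T, Y \in gens, Y \subset T & X :|: Y != T].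

Definition Conn (V : finType) (gens : {set {set V}}) (T : {set V}) : Prop :=
  forall X Y, X \in gens -> Y \in gens -> X \subset T -> Y \subset T ->
    connect (Hrel gens T) X Y.

Definition ind (V : finType) (T : {set V}) : V -> nat := fun v => nat_of_bool (v \in T).

Lemma sum_ind (V : finType) (T : {set V}) : (\sum_(v : V) ind T v)%N = #|T|.
Proof.
rewrite /ind -big_mkcond /= -sum1_card; by apply: eq_bigr.
Qed.

Lemma sdiv_ind_dec (V : finType) (T : {set V}) (i : V) (S : {set V}) :
  i \in T -> sdivides S (mdec (ind T) i) -> (S \subset T :\ i).
Proof.
move=> iT /forallP H; apply/subsetP => v vS; have := H v; rewrite vS /= /mdec /ind.
rewrite !inE; case: (v =P i) => [->|_]; first by rewrite iT.
by case: (v \in T).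
Qed.

Lemma sum_delta (K : fieldType) (V : finType) (S : {set V}) :
  (\sum_(X : {set V}) delta K S X = 1)%R.
Proof.
rewrite (bigD1 S) //= big1 ?addr0 /delta ?eqxx // => X /negbTE ->; by [].
Qed.

Lemma LR_conn (K : fieldType) (V : finType) (gens : {set {set V}}) (d : nat) :
  linearly_related_gens K gens d -> forall T : {set V}, #|T| <> d.+1 -> Conn gens T.
Proof.
move=> LR T hT X Y Xg Yg XT YT.
case: (boolP (connect (Hrel gens T) X Y)) => // nc; exfalso.
have XY : X != Y by apply: contraNneq nc => ->; apply: connect0.
pose c := fun S => (delta K X S - delta K Y S)%R.
have sc : syz_comp gens (ind T) c.
  split; last by rewrite /c sumrB !sum_delta subrr.
  move=> S; rewrite /c /delta; case: (S =P X) => [eX|_]; case: (S =P Y) => [eY|_];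
    rewrite ?subrr ?eqxx //.
  - move=> _; rewrite eX Xg /=; apply/forallP => v; apply/implyP => vX.
    by rewrite /ind (subsetP XT v vX).
  - move=> _; rewrite eY Yg /=; apply/forallP => v; apply/implyP => vX.
    by rewrite /ind (subsetP YT v vX).
have hs : (\sum_(v : V) ind T v)%N <> d.+1 by rewrite sum_ind.
have [cs [Hcs Hsum]] := LR (ind T) hs c sc.
pose C := [set Z | connect (Hrel gens T) X Z].
have s1 : (\sum_(S in C) c S = 1)%R.
  rewrite (bigD1 X) ?inE ?connect0 //= big1 ?addr0.
    by rewrite /c /delta eqxx (negbTE XY) subr0.
  move=> S /andP[SC SX]; rewrite /c /delta (negbTE SX).
  case: (S =P Y) => [eSY|_]; last by rewrite subrr.
  by move: SC; rewrite eSY inE (negbTE nc).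
have s0 : (\sum_(S in C) c S = 0)%R.
  rewrite (eq_bigr (fun S => \sum_(i : V) cs i S)%R); last by move=> S _; rewrite Hsum.
  rewrite exchange_big /= big1 // => i _.
  have [H1 H2] := Hcs i.
  case: (boolP (i \in T)) => iT; last first.
    by apply: big1 => S _; apply: H2; rewrite /ind (negbTE iT).
  case: (boolP [exists Z, (Z \in C) && (cs i Z != 0)%R]) => [/existsP[Z /andP[ZC csZ]]|nex].
    have [HZ _] := H1.
    rewrite -[in RHS](proj2 H1) [in LHS]big_mkcond /=; apply: eq_bigr => S _.
    case: ifP => // SC; case: (boolP (cs i S == 0)%R) => [/eqP //|csS].
    exfalso; move/negbT: SC; rewrite inE => /negP; apply.
    move: ZC; rewrite inE => /connect_trans; apply; apply: connect1.
    have /andP[Zg /(sdiv_ind_dec iT) ZTi] := HZ Z csZ.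
    have /andP[Sg /(sdiv_ind_dec iT) STi] := HZ S csS.
    rewrite /Hrel Zg Sg (subset_trans ZTi (subsetDl _ _)) (subset_trans STi (subsetDl _ _)) /=.
    apply: contraTneq iT => <-; apply/negP => /setUP[] /[dup] h.
      by move/(subsetP ZTi); rewrite !inE eqxx.
    by move/(subsetP STi); rewrite !inE eqxx.
  apply: big1 => S SC; apply/eqP; move: nex; rewrite negb_exists => /forallP/(_ S).
  by rewrite SC /= negbK.
by move: (oner_neq0 K); rewrite -s1 s0 eqxx.
Qed.


Lemma in_sqf (V : finType) (E : rel V) (k : nat) (S : {set V}) :
  S \in sqf_gens E k <-> exists M, [/\ is_matching E M, #|M| = k & cover M = S].
Proof.
rewrite inE; split.
  by move=> /existsP[M /and3P[hM /eqP hk /eqP hc]]; exists M.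
by move=> [M [hM hk hc]]; apply/existsP; exists M; rewrite hM hk hc !eqxx.
Qed.

Lemma edge_card (V : finType) (E : rel V) (e : {set V}) :
  simple_graph E -> is_edge E e -> #|e| = 2.
Proof.
move=> [_ irr] /existsP[x /existsP[y /andP[Exy /eqP ->]]].
rewrite cards2; case: (x =P y) => // exy; by move: Exy; rewrite exy irr.
Qed.

Lemma cover_card (V : finType) (E : rel V) (M : {set {set V}}) :
  simple_graph E -> is_matching E M -> #|cover M| = (2 * #|M|)%N.
Proof.
move=> sg /andP[/forallP he /eqP <-].
rewrite (eq_bigr (fun _ => 2)); first by rewrite sum_nat_const mulnC.
move=> B BM; apply: (edge_card sg); exact: (implyP (he B) BM).
Qed.

Lemma match_rem (V : finType) (E : rel V) (M : {set {set V}}) (e : {set V}) :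
  is_matching E M -> e \in M ->
  [/\ is_matching E (M :\ e), #|M :\ e| = #|M|.-1, cover (M :\ e) = cover M :\: e
    & e \subset cover M].
Proof.
move=> /andP[/forallP he tM] eM; split.
- rewrite /is_matching trivIsetD // andbT; apply/forallP => B; apply/implyP.
  by rewrite inE => /andP[_ BM]; exact: (implyP (he B) BM).
- by rewrite (cardsD1 e M) eM.
- exact: coverD1.
- exact: bigcup_sup.
Qed.

Lemma match_add (V : finType) (E : rel V) (M : {set {set V}}) (e : {set V}) :
  simple_graph E -> is_matching E M -> is_edge E e -> [disjoint e & cover M] ->
  [/\ is_matching E (e |: M), #|e |: M| = #|M|.+1 & cover (e |: M) = e :|: cover M].
Proof.
move=> sg /andP[/forallP he tM] ee dis.
have dB : {in M, forall B : {set V}, [disjoint e & B]}.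
  by move=> B BM; move/bigcup_disjointP: dis; apply.
have n0 : set0 \notin M.
  apply/negP => h; have := edge_card sg (implyP (he set0) h).
  by rewrite cards0.
have [tU eM] := trivIsetU1 dB tM n0.
split.
- rewrite /is_matching tU andbT; apply/forallP => B; apply/implyP.
  by case/setU1P => [->|BM] //; exact: (implyP (he B) BM).
- by rewrite cardsU1 eM.
- by rewrite /cover bigcup_setU big_set1.
Qed.

Lemma connect_map (T1 T2 : finType) (f : T1 -> T2) (e1 : rel T1) (e2 : rel T2) x y :
  (forall x y, e1 x y -> e2 (f x) (f y)) -> connect e1 x y -> connect e2 (f x) (f y).
Proof.
move=> hf /connectP[p]; elim: p x => [|z p IH] x /=; first by move=> _ ->; apply: connect0.
move=> /andP[hxz hp] ey; apply: connect_trans (connect1 (hf _ _ hxz)) (IH z hp ey).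
Qed.

Lemma class_lemma (V : finType) (E : rel V) (k : nat) (T : {set V})
  (N1 N2 : {set {set V}}) (e : {set V}) :
  simple_graph E ->
  (forall T : {set V}, #|T| <> (2 * k).+1 -> Conn (sqf_gens E k) T) ->
  (2 * k.+1 + 2 <= #|T|)%N ->
  is_matching E N1 -> is_matching E N2 -> #|N1| = k.+1 -> #|N2| = k.+1 ->
  e \in N1 -> e \in N2 -> cover N1 \subset T -> cover N2 \subset T ->
  connect (Hrel (sqf_gens E k.+1) T) (cover N1) (cover N2).
Proof.
move=> sg HC hT m1 m2 c1 c2 e1 e2 s1 s2.
have [r1 r1c r1v eS1] := match_rem m1 e1.
have [r2 r2c r2v eS2] := match_rem m2 e2.
have eedge : is_edge E e by move: m1 => /andP[/forallP/(_ e)/implyP/(_ e1)].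
have eT : e \subset T := subset_trans eS1 s1.
have ce := edge_card sg eedge.
have hTe : #|T :\: e| <> (2 * k).+1.
  rewrite cardsD (setIidPr eT) ce => h.
  have h2 : #|T| = (2 * k).+3.
    rewrite -(subnK (_ : 2 <= #|T|)) ?h ?addn2 //.
    by apply: leq_trans hT; rewrite leq_addl.
  by move: hT; rewrite h2 mulnS addn2 add2n ltnn.
have eq1 : forall (N : {set {set V}}), e \subset cover N -> cover N :\: e = cover (N :\ e) ->
   cover N = e :|: cover (N :\ e).
  move=> N eN <-; apply/setP => v; rewrite !inE.
  case ve: (v \in e) => //=; by rewrite (subsetP eN v ve).
have g1 : cover (N1 :\ e) \in sqf_gens E k.
  by apply/in_sqf; exists (N1 :\ e); split => //; rewrite r1c c1.
have g2 : cover (N2 :\ e) \in sqf_gens E k.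
  by apply/in_sqf; exists (N2 :\ e); split => //; rewrite r2c c2.
have t1 : cover (N1 :\ e) \subset T :\: e by rewrite r1v setSD.
have t2 : cover (N2 :\ e) \subset T :\: e by rewrite r2v setSD.
rewrite (eq1 N1 eS1 (esym r1v)) (eq1 N2 eS2 (esym r2v)).
apply: (connect_map (f := fun X => e :|: X)) (HC _ hTe _ _ g1 g2 t1 t2).
move=> X Y /and5P[Xg XT Yg YT XYT].
have lift : forall Z, Z \in sqf_gens E k -> Z \subset T :\: e ->
    (e :|: Z \in sqf_gens E k.+1) && (e :|: Z \subset T).
  move=> Z /in_sqf[M [mM cM <-]] ZT.
  have dis : [disjoint e & cover M].
    rewrite disjoint_sym disjoint_subset; apply/subsetP => v vM; have := subsetP ZT v vM.
    by rewrite !inE => /andP[].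
  have [mA cA vA] := match_add sg mM eedge dis.
  rewrite subUset eT (subset_trans ZT (subsetDl _ _)) andbT.
  rewrite andbT; apply/in_sqf; exists (e |: M); by split; rewrite ?cA ?cM.
have /andP[h1 h2] := lift X Xg XT; have /andP[h3 h4] := lift Y Yg YT; rewrite /Hrel h1 h2 h3 h4 /=.
apply: contra XYT => /eqP H; apply/eqP/setP => v; rewrite -H !inE.
have hX := subsetP XT v; have hY := subsetP YT v; move: hX hY; rewrite !inE.
case: (v \in e); case: (v \in X); case: (v \in Y) => //=.
all: try by move=> q1 q2; have := q1 isT.
all: try by move=> q1 q2; have := q2 isT.
Qed.

Lemma conn_step (V : finType) (E : rel V) (k : nat) :
  simple_graph E -> (1 <= k)%N ->
  (forall T : {set V}, #|T| <> (2 * k).+1 -> Conn (sqf_gens E k) T) ->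
  forall T : {set V}, #|T| <> (2 * k.+1).+1 -> Conn (sqf_gens E k.+1) T.
Proof.
move=> sg k1 HC T hT A B Ag Bg AT BT.
have cardg : forall Z, Z \in sqf_gens E k.+1 -> #|Z| = (2 * k.+1)%N.
  by move=> Z /in_sqf[M [mM kM <-]]; rewrite (cover_card sg mM) kM.
have cA := cardg A Ag; have cB := cardg B Bg.
case: (leqP #|T| (2 * k.+1)) => [small|big].
  have eA : A = T by apply/eqP; rewrite eqEcard AT cA small.
  have eB : B = T by apply/eqP; rewrite eqEcard BT cB small.
  by rewrite eA eB connect0.
have hT4 : (2 * k.+1 + 2 <= #|T|)%N.
  move: big; rewrite leq_eqVlt => /orP[/eqP h|]; first by exfalso; apply: hT.
  by rewrite addn2.
case: (A =P B) => [->|nAB]; first exact: connect0.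
have : ~~ (B \subset A).
  apply/negP => BA; apply: nAB; apply/eqP; by rewrite eq_sym eqEcard BA cA cB leqnn.
case/subsetPn => v vB vA.
move: Ag Bg => /in_sqf[MA [mA kA cMA]] /in_sqf[MB [mB kB cMB]].
have mA' := mA; have mB' := mB.
move: mA' mB' => /andP[/forallP heA tA] /andP[/forallP heB tB].
move: (vB); rewrite -cMB => /bigcupP[f fMB vf].
have fedge := implyP (heB f) fMB.
have fB : f \subset B by rewrite -cMB; apply: bigcup_sup.
have [g gM dg] : exists2 g, g \in MA & [disjoint f & cover (MA :\ g)].
  case: (boolP [exists g, (g \in MA) && ~~ [disjoint f & g]]) => [/existsP[g /andP[gM ng]]|nex].
    exists g => //; rewrite coverD1 //.
    rewrite disjoint_subset; apply/subsetP => u uf; rewrite !inE negb_and negbK.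
    case: (boolP (u \in cover MA)) => [/bigcupP[h hM uh]|]; last by rewrite orbT.
    move: ng; rewrite -setI_eq0 => /set0Pn[u' ]; rewrite inE => /andP[u'f u'g].
    have u'A : u' \in A by rewrite -cMA; apply/bigcupP; exists g.
    have uA : u \in A by rewrite -cMA; apply/bigcupP; exists h.
    have uu : u = u'.
      move: fedge => /existsP[x /existsP[y /andP[_ /eqP ef]]].
      have nu : u != v by apply: contraNneq vA => <-.
      have nu' : u' != v by apply: contraNneq vA => <-.
      move: uf u'f vf nu nu'; rewrite ef => /set2P[]-> /set2P[]-> /set2P[] ev //.
      1-4: by rewrite ev eqxx.
    case: (g =P h) => [->|ngh]; first by rewrite uh.
    have := (trivIsetP tA) g h gM hM (introT negP (fun q => ngh (eqP q))).
    by rewrite -setI_eq0 => /eqP/setP/(_ u); rewrite !inE uh uu u'g.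
  have : (0 < #|MA|)%N by rewrite kA.
  case/card_gt0P => g gM; exists g => //.
  apply: bigcup_disjoint => h; rewrite !inE => /andP[_ hM].
  move: nex; rewrite negb_exists => /forallP/(_ h); rewrite hM /=; by rewrite negbK.
have [rm rc rv rs] := match_rem mA gM.
have : (0 < #|MA :\ g|)%N by rewrite rc kA.
case/card_gt0P => e eMg.
have eM : e \in MA by move: eMg; rewrite !inE => /andP[].
have [mN cN vN] := match_add sg rm fedge dg.
have cN' : #|f |: (MA :\ g)| = k.+1 by rewrite cN rc kA.
have NT : cover (f |: (MA :\ g)) \subset T.
  rewrite vN subUset (subset_trans fB BT) /= rv.
  by apply: subset_trans (subsetDl _ _) _; rewrite cMA.
have eN : e \in f |: (MA :\ g) by rewrite setU1r.
have fN : f \in f |: (MA :\ g) by rewrite setU11.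
apply: (@connect_trans _ _ (cover (f |: (MA :\ g)))).
  rewrite -cMA; apply: (class_lemma sg HC hT4 mA mN kA cN' eM eN) => //.
  by rewrite cMA.
apply: (class_lemma sg HC hT4 mN mB cN' kB fN fMB) => //.
by rewrite cMB.
Qed.


Definition W (K : fieldType) (V : finType) (gens : {set {set V}}) (a : V -> nat)
  (c : {set V} -> K) : Prop :=
  exists cs : V -> {set V} -> K,
    (forall i, syz_comp gens (mdec a i) (cs i) /\
               (a i = 0%N -> forall S, cs i S = 0%R)) /\
    (forall S, c S = (\sum_(i : V) cs i S)%R).

Lemma W_ext (K : fieldType) (V : finType) (gens : {set {set V}}) (a : V -> nat) (c c' : {set V} -> K) :
  (forall S, c S = c' S) -> W gens a c -> W gens a c'.
Proof. by move=> e [cs [H1 H2]]; exists cs; split=> // S; rewrite -e. Qed.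

Lemma W0 (K : fieldType) (V : finType) (gens : {set {set V}}) (a : V -> nat) : W gens a (fun _ : {set V} => 0%R : K).
Proof.
exists (fun _ _ => 0%R); split; last by move=> S; rewrite big1.
by move=> i; split=> //; split; [move=> S; rewrite eqxx | rewrite big1].
Qed.

Lemma W_add (K : fieldType) (V : finType) (gens : {set {set V}}) (a : V -> nat) (c1 c2 : {set V} -> K) :
  W gens a c1 -> W gens a c2 -> W gens a (fun S => c1 S + c2 S)%R.
Proof.
move=> [cs1 [A1 B1]] [cs2 [A2 B2]].
exists (fun i S => cs1 i S + cs2 i S)%R; split; last first.
  by move=> S; rewrite big_split /= B1 B2.
move=> i; have [[s1 z1] h1] := A1 i; have [[s2 z2] h2] := A2 i.
split; last by move=> ai S; rewrite h1 // h2 // addr0.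
split; last by rewrite big_split /= z1 z2 addr0.
move=> S nz; case: (boolP (cs1 i S == 0)%R) => [/eqP e1|n1]; last exact: s1.
apply: s2; apply: contraNneq nz => ->; by rewrite e1 addr0.
Qed.

Lemma W_scale (K : fieldType) (V : finType) (gens : {set {set V}}) (a : V -> nat) (c : {set V} -> K) (x : K) :
  W gens a c -> W gens a (fun S => x * c S)%R.
Proof.
move=> [cs [A B]]; exists (fun i S => x * cs i S)%R; split; last first.
  by move=> S; rewrite B mulr_sumr.
move=> i; have [[s z] h] := A i.
split; last by move=> ai S; rewrite h // mulr0.
split; last by rewrite -mulr_sumr z mulr0.
move=> S nz; apply: s; apply: contraNneq nz => ->; by rewrite mulr0.
Qed.

Lemma W_sum (K : fieldType) (V : finType) (gens : {set {set V}}) (a : V -> nat) (I : Type) (r : seq I) (F : I -> {set V} -> K) :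
  (forall j, W gens a (F j)) -> W gens a (fun S => \sum_(j <- r) F j S)%R.
Proof.
move=> HF; elim: r => [|j r IH].
  by apply: (W_ext _ (W0 K gens a)) => S; rewrite big_nil.
apply: (W_ext _ (W_add (HF j) IH)) => S; by rewrite big_cons.
Qed.

Lemma W_edge (K : fieldType) (V : finType) (gens : {set {set V}}) (a : V -> nat) (T X Y : {set V}) :
  (forall v, a v = ind T v) ->
  X \in gens -> Y \in gens -> X \subset T -> Y \subset T -> X :|: Y != T ->
  W gens a (fun S => delta K X S - delta K Y S)%R.
Proof.
move=> ha Xg Yg XT YT XYT.
have : exists i, (i \in T) && (i \notin X :|: Y).
  apply/existsP; move: XYT; apply: contraNT; rewrite negb_exists => /forallP H.
  rewrite eqEsubset subUset XT YT /=; apply/subsetP => v vT.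
  by have := H v; rewrite vT /= negbK.
move=> [i /andP[iT]]; rewrite inE negb_or => /andP[iX iY].
exists (fun j S => if j == i then delta K X S - delta K Y S else 0)%R; split; last first.
  by move=> S; rewrite (bigD1 i) //= eqxx big1 ?addr0 // => j /negbTE ->.
move=> j; case: (j =P i) => [->|_]; last first.
  split; last by [].
  by split; [move=> S; rewrite eqxx | rewrite big1].
split; last by rewrite ha /ind iT.
split; last by rewrite sumrB !sum_delta subrr.
have hd : forall Z : {set V}, Z \subset T -> i \notin Z -> sdivides Z (mdec a i).
  move=> Z ZT iZ; apply/forallP => v; apply/implyP => vZ.
  rewrite /mdec; case: (v =P i) => [evi|_]; first by move: iZ; rewrite -evi vZ.
  by rewrite ha /ind (subsetP ZT v vZ).
move=> S; rewrite /delta; case: (S =P X) => [->|_]; first by rewrite Xg hd.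
by case: (S =P Y) => [->|_]; [rewrite Yg hd | rewrite subrr eqxx].
Qed.

Lemma W_conn (K : fieldType) (V : finType) (gens : {set {set V}}) (a : V -> nat) (T X Y : {set V}) :
  (forall v, a v = ind T v) ->
  X \in gens -> X \subset T -> connect (Hrel gens T) X Y ->
  W gens a (fun S => delta K X S - delta K Y S)%R.
Proof.
move=> ha Xg XT /connectP[p]; elim: p X Xg XT => [|z p IH] X Xg XT /=.
  by move=> _ ->; apply: (W_ext _ (W0 K gens a)) => S; rewrite subrr.
move=> /andP[hXz hp] eY.
have := hXz; rewrite /Hrel => /and5P[_ _ zg zT XzT].
apply: (W_ext _ (W_add (W_edge K ha Xg zg XT zT XzT) (IH z zg zT hp eY))).
by move=> S; rewrite addrA subrK.
Qed.

Lemma conn_LR (K : fieldType) (V : finType) (gens : {set {set V}}) (d : nat) :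
  (forall T : {set V}, #|T| <> d.+1 -> Conn gens T) -> linearly_related_gens K gens d.
Proof.
move=> HC a ha c [sc zc].
case: (boolP [exists i, 1 < a i]%N) => [/existsP[i ai]|].
  exists (fun j => if j == i then c else fun _ => 0%R); split; last first.
    by move=> S; rewrite (bigD1 i) //= eqxx big1 ?addr0 // => j /negbTE ->.
  move=> j; case: (j =P i) => [->|_]; last first.
    by split; [split; [move=> S; rewrite eqxx | rewrite big1] |].
  split; last by move=> a0; move: ai; rewrite a0.
  split => // S /sc /andP[-> /forallP H] /=; apply/forallP => v; apply/implyP => vS.
  have := H v; rewrite vS /= /mdec; case: (v =P i) => [->|//] _.
  by rewrite -ltnS prednK // ltnW.
rewrite negb_exists => /forallP Ha.
pose T := [set v | 0 < a v]%N.
have hT : forall v, a v = ind T v.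
  move=> v; have := Ha v; rewrite /ind inE; case: (a v) => [|[|n]] //.
have hTc : #|T| <> d.+1.
  by move=> e; apply: ha; rewrite -e -(sum_ind T); apply: eq_bigr => v _.
case: (boolP [exists S, c S != 0%R]) => [/existsP[S0 cS0]|]; last first.
  rewrite negb_exists => /forallP H0.
  by apply: (W_ext _ (W0 K gens a)) => S; have := H0 S; rewrite negbK => /eqP.
have /andP[S0g /forallP S0d] := sc S0 cS0.
have hsub : forall S, sdivides S a -> S \subset T.
  by move=> S /forallP H; apply/subsetP => v vS; have := H v; rewrite vS inE.
have S0T := hsub S0 (introT forallP S0d).
pose F := fun S X => (c S * (delta K S X - delta K S0 X))%R.
have WF : forall S, W gens a (F S).
  move=> S; case: (boolP (c S == 0)%R) => [/eqP cS|cS].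
    by apply: (W_ext _ (W0 K gens a)) => X; rewrite /F cS mul0r.
  have /andP[Sg Sd] := sc S cS; have ST := hsub S Sd.
  apply: (W_scale (c S)); apply: (W_conn K hT Sg ST).
  exact: HC hTc S S0 Sg S0g ST S0T.
apply: (W_ext _ (W_sum (index_enum _) WF)) => X.
rewrite /F; under eq_bigr do rewrite mulrBr.
rewrite sumrB -mulr_suml zc mul0r subr0.
rewrite (bigD1 X) //= /delta eqxx mulr1 big1 ?addr0 // => S /negbTE.
by rewrite eq_sym => ->; rewrite mulr0.
Qed.

Theorem theorem3p1 (K : fieldType) (V : finType) (E : rel V) (k : nat) :
  simple_graph E ->
  (1 <= k)%N -> (k < matching_number E)%N ->
  sqf_power_linearly_related K E k ->
  sqf_power_linearly_related K E k.+1.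
Proof.
move=> sg k1 _ HLR.
apply: conn_LR => T hT.
exact: (conn_step sg k1 (fun T0 hT0 => LR_conn HLR hT0) hT).
Qed.
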